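(* Let $n\ge 0$ and $0\le k\le n$ be integers of the same parity (both even or both odd). Then $$\max_{x\in[-1,1]}|T_{n;\ge k}(x)|=|T_{n;\ge k}(0)|=|t_{n,k}|,$$ and consequently this maximum is at most $(n+k)^k/k!$.
   Context: For an integer $n\ge 0$, $T_n$ denotes the Chebyshev polynomial of the first kind, i.e. the polynomial with $T_n(\cos\theta)=\cos(n\theta)$ for all real $\theta$; write $T_n(x)=\sum_{j=0}^n t_{n,j}x^j$. For $0\le k\le n$ define the constituent polynomial $T_{n;\ge k}(x):=\sum_{j=k}^{n}t_{n,j}x^{j-k}$, so that $T_n(x)=\sum_{j=0}^{k-1}t_{n,j}x^j+x^kT_{n;\ge k}(x)$. *)

(* Defs.v *)
From HB Require Import structures.
From mathcomp Require Import all_boot all_order all_algebra.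
From mathcomp Require Import all_classical all_reals all_analysis.
From mathcomp Require Import ring.
Set Implicit Arguments. Unset Strict Implicit. Unset Printing Implicit Defensive.
Import Order.TTheory GRing.Theory Num.Theory.
Local Open Scope ring_scope.

Fixpoint cheb_pair (R : nzRingType) (n : nat) : {poly R} * {poly R} :=
  match n with
  | 0 => (1, 'X)
  | m.+1 => let: (a, b) := cheb_pair R m in (b, 2%:R *: 'X * b - a)
  end.

Definition cheb (R : nzRingType) (n : nat) : {poly R} := (cheb_pair R n).1.

(* The constituent polynomial T_{n; >= k}(x) = sum_{j=k}^n t_{n,j} x^{j-k}. *)
Definition cheb_ge (R : nzRingType) (n k : nat) : {poly R} :=
  \poly_(i < (n.+1 - k)%N) (cheb R n)`_(i + k).

Lemma cheb0 (R : nzRingType) : cheb R 0 = 1. Proof. by []. Qed.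
Lemma cheb1 (R : nzRingType) : cheb R 1 = 'X. Proof. by []. Qed.
Lemma chebSS (R : nzRingType) n :
  cheb R n.+2 = 2%:R *: 'X * cheb R n.+1 - cheb R n.
Proof.
rewrite /cheb /=; case: (cheb_pair R n) => a b /=. by [].
Qed.

Lemma cheb_cos (R : realType) (n : nat) (t : R) :
  (cheb R n).[cos t] = cos (n%:R * t).
Proof.
have H : forall m, (cheb R m).[cos t] = cos (m%:R * t) /\
                   (cheb R m.+1).[cos t] = cos (m.+1%:R * t).
  elim=> [|m [IH1 IH2]]; first by rewrite cheb0 cheb1 !hornerE cos0.
  split=> //; rewrite chebSS !hornerE IH1 IH2.
  have E2 : m.+2%:R * t = m.+1%:R * t + t by rewrite -[m.+2]addn1 natrD; ring.
  have E0 : m%:R * t = m.+1%:R * t - t by rewrite -[m.+1]addn1 natrD; ring.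
  rewrite E2 E0 cosB cosD; ring.
by case: (H n).
Qed.

(* Main.v *)
Require Import Defs.
From HB Require Import structures.
From mathcomp Require Import all_boot all_order all_algebra.
From mathcomp Require Import all_classical all_reals all_analysis.
From mathcomp Require Import ring lra zify.
Import Order.TTheory GRing.Theory Num.Theory.
Local Open Scope ring_scope.

Section S.
Variable R : realType.
Notation ch := (cheb R).
Notation G := (cheb_ge R).

Lemma coef_chebSS n j : (ch n.+2)`_j.+1 = 2 * (ch n.+1)`_j - (ch n)`_j.+1.
Proof. by rewrite chebSS coefB -scalerAl coefZ coefXM. Qed.

Lemma coef_cheb_big n0 j0 : (n0 < j0)%N -> (ch n0)`_j0 = 0.
Proof.
have H : forall n, (forall j, (n < j)%N -> (ch n)`_j = 0) /\
                   (forall j, (n.+1 < j)%N -> (ch n.+1)`_j = 0).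
  elim=> [|m [IH1 IH2]].
    split; move=> j hj; first by rewrite cheb0 coef1; case: j hj.
    by rewrite cheb1 coefX; case: j hj => // -[|].
  split=> //; case=> [|j] hj //.
  rewrite coef_chebSS IH2 ?IH1; first (by rewrite mulr0 subrr); lia.
by move: (H n0) => [] + _; apply.
Qed.

Lemma coef_G n k i : (G n k)`_i = (ch n)`_(i + k).
Proof.
rewrite /cheb_ge coef_poly; case: ifP => // /negbT; rewrite -leqNgt => h.
by rewrite coef_cheb_big //; lia.
Qed.

Lemma G_rec n k : G n.+2 k.+1 = 2%:R *: G n.+1 k - G n k.+1.
Proof.
apply/polyP=> i; rewrite coefB coefZ !coef_G.
by rewrite !addnS coef_chebSS.
Qed.

Lemma G_0 n : G n 0 = ch n.
Proof. by apply/polyP=> i; rewrite coef_G addn0. Qed.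

Lemma G_big n k : (n < k)%N -> G n k = 0.
Proof. move=> h; apply/polyP=> i; rewrite coef_G coef0 coef_cheb_big //; lia. Qed.

Lemma cheb_at0 m0 : (ch m0).[0] = if odd m0 then 0 else (-1) ^+ m0./2.
Proof.
have H : forall m, (ch m).[0] = (if odd m then 0 else (-1) ^+ m./2) /\
                   (ch m.+1).[0] = (if odd m.+1 then 0 else (-1) ^+ m.+1./2).
  elim=> [|m [IH1 IH2]]; first by rewrite cheb0 cheb1 !hornerE.
  split=> //; rewrite chebSS !hornerE IH1 /=.
  by case: (odd m) => /=; rewrite ?exprS; ring.
by case: (H m0).
Qed.

Lemma cheb_bound m x : -1 <= x <= 1 -> `|(ch m).[x]| <= 1.
Proof. by move=> /acos_def [_ <-]; rewrite cheb_cos cos_max. Qed.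


Lemma nat_key (N k : nat) : (2 * k.+1 * N ^ k + N ^ k.+1 <= N.+2 ^ k.+1)%N.
Proof.
elim: k => [|k IH]; first by rewrite !expn0 !expn1; lia.
have := leq_mul (leqnn N.+2) IH.
rewrite [(N.+2 ^ k.+2)%N]expnS [(N ^ k.+2)%N]expnS [(N ^ k.+1)%N]expnS.
move: (N ^ k)%N => p; move: (N.+2 ^ k.+1)%N => Q; nia.
Qed.

Lemma key (N k : nat) :
  2 * ((N ^ k)%:R / (k`!)%:R) + (N ^ k.+1)%:R / (k.+1`!)%:R
    <= ((N.+2) ^ k.+1)%:R / (k.+1`!)%:R :> R.
Proof.
have hf : (k`!)%:R != 0 :> R by rewrite pnatr_eq0 -lt0n fact_gt0.
have e : 2 * ((N ^ k)%:R / (k`!)%:R) = ((2 * k.+1 * N ^ k)%N)%:R / (k.+1`!)%:R :> R.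
  rewrite factS !natrM; field; rewrite hf /=.
  by apply/negP => /eqP; have := ler0n R k; lra.
rewrite e -mulrDl -natrD; apply: ler_wpM2r.
  by rewrite invr_ge0 ler0n.
by rewrite ler_nat nat_key.
Qed.


Lemma tbound n0 k0 : `|(ch n0)`_k0| <= ((n0 + k0) ^ k0)%:R / (k0`!)%:R.
Proof.
have B0 : forall n k, 0 <= ((n + k) ^ k)%:R / (k`!)%:R :> R.
  by move=> n k; rewrite divr_ge0 ?ler0n.
pose P n k := `|(ch n)`_k| <= ((n + k) ^ k)%:R / (k`!)%:R :> R.
have H : forall n, (forall k, P n k) /\ (forall k, P n.+1 k).
  elim=> [|n [IH1 IH2]]; rewrite /P; last (move: IH1 IH2; rewrite /P => IH1 IH2).
    split; case=> [|k]; rewrite /P.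
    - by rewrite cheb0 coef1 /= normr1 expn0 divr1.
    - by rewrite cheb0 coef1 /= normr0.
    - by rewrite cheb1 coefX /= normr0.
    - rewrite cheb1 coefX; case: k => [|k] /=.
        by rewrite normr1 divr1 expn1 ler1n.
      by rewrite normr0.
  split=> //; case=> [|k].
    rewrite expn0 fact0 divr1 -horner_coef0; apply: cheb_bound.
    by rewrite lerN10 ler01.
  rewrite coef_chebSS.
  apply: le_trans (ler_normB _ _) _.
  rewrite normrM ger0_norm ?ler0n //.
  apply: le_trans (lerD (ler_wpM2l (ler0n _ 2) (IH2 k)) (IH1 k.+1)) _.
  have -> : (n.+2 + k.+1 = (n.+1 + k).+2)%N by lia.
  have -> : (n + k.+1 = n.+1 + k)%N by lia.
  exact: key.
by case: (H n0) => + _; apply.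
Qed.


Definition sgn n k : R := (-1) ^+ ((n - k)./2).

Definition Inv n k := exists a : nat -> R,
  [/\ (forall m, (n < m)%N -> a m = 0), (forall m, odd m -> a m = 0),
      (forall m, 0 <= sgn n k * a m * (ch m).[0]) &
      forall x, (G n k).[x] = \sum_(m < n.+1) a m * (ch m).[x]].

Lemma widen (a : nat -> R) (f : nat -> R) N M : (N <= M)%N ->
  (forall m, (N <= m)%N -> a m = 0) ->
  \sum_(m < M) a m * f m = \sum_(m < N) a m * f m.
Proof.
move=> hNM hz; elim: M hNM => [|M IH] h.
  by have -> : N = 0%N by lia.
case: (ltngtP N M.+1) h => // [hlt _|-> _].
  by rewrite big_ord_recr /= IH // hz // mul0r addr0.
by [].
Qed.

Lemma Inv_big n k : (n < k)%N -> Inv n k.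
Proof.
move=> h; exists (fun _ => 0); split=> //.
  by move=> m; rewrite mulr0 mul0r.
by move=> x; rewrite G_big // horner0 big1 // => i _; rewrite mul0r.
Qed.

Lemma Inv_0 n : ~~ odd n -> Inv n 0.
Proof.
move=> hn; exists (fun m => if m == n then 1 else 0); split.
- by move=> m hm; case: eqP => // e; move: hm; rewrite e ltnn.
- by move=> m hm; case: eqP => // e; move: hm; rewrite e (negbTE hn).
- move=> m; case: eqP => [->|_]; last by rewrite mulr0 mul0r.
  rewrite mulr1 cheb_at0 (negbTE hn) /sgn subn0.
  by rewrite -expr2 sqr_ge0.
- move=> x; rewrite G_0 big_ord_recr /= eqxx mul1r big1 ?add0r // => i _.
  by rewrite (ltn_eqF (ltn_ord i)) mul0r.
Qed.


Lemma Inv_11 : Inv 1 1.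
Proof.
exists (fun m => if m == 0%N then 1 else 0); split.
- by case=> [|[|m]].
- by case.
- by case=> [|m] /=; rewrite ?mulr0 ?mul0r // /sgn cheb0 hornerC expr0 mulr1.
- move=> x; have -> : G 1 1 = 1.
    by apply/polyP=> i; rewrite coef_G cheb1 coefX coef1 addn1.
  by rewrite !big_ord_recr big_ord0 /= cheb0 !hornerE; ring.
Qed.

Lemma Inv_step n k : Inv n.+1 k -> ((k.+1 <= n)%N -> Inv n k.+1) -> Inv n.+2 k.+1.
Proof.
move=> [a [az1 az2 as1 ae1]] Hb.
have [b [bz1 bz2 bs1 be1]] : exists b : nat -> R,
  [/\ (forall m, (n < m)%N -> b m = 0), (forall m, odd m -> b m = 0),
      (forall m, 0 <= - sgn n.+1 k * b m * (ch m).[0]) &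
      forall x, (G n k.+1).[x] = \sum_(m < n.+1) b m * (ch m).[x]].
  case: (leqP k.+1 n) => hk.
    have [b [bz1 bz2 bs1 be1]] := Hb hk.
    exists b; split=> // m.
    have -> : sgn n.+1 k = - sgn n k.+1.
      rewrite /sgn; have -> : (n.+1 - k = (n - k.+1).+2)%N by lia.
      by rewrite /= exprS mulN1r.
    by rewrite opprK.
  exists (fun _ => 0); split=> //.
    by move=> m; rewrite mulr0 mul0r.
  by move=> x; rewrite G_big // horner0 big1 // => i _; rewrite mul0r.
exists (fun m => 2 * a m - b m); split.
- by move=> m hm; rewrite az1 ?bz1 //; [rewrite mulr0 subrr | lia | lia].
- by move=> m hm; rewrite az2 ?bz2 // mulr0 subrr.
- move=> m; rewrite /sgn subSS -/(sgn n.+1 k).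
  have := as1 m; have := bs1 m; nra.
- move=> x; rewrite G_rec !hornerE ae1 be1.
  have wa : forall m, (n.+2 <= m)%N -> a m = 0 by move=> m hm; apply: az1; lia.
  have wb : forall m, (n.+1 <= m)%N -> b m = 0 by move=> m hm; apply: bz1; lia.
  rewrite -(@widen a (fun m => (ch m).[x]) n.+2 n.+3 (leqnSn _) wa).
  rewrite -(@widen b (fun m => (ch m).[x]) n.+1 n.+3 (leqW (leqnSn _)) wb).
  rewrite mulr_sumr -sumrB; apply: eq_bigr => i _; ring.
Qed.

Lemma Inv_all n0 k0 : odd n0 = odd k0 -> Inv n0 k0.
Proof.
have H : forall n, (forall k, odd n = odd k -> Inv n k) /\
                   (forall k, odd n.+1 = odd k -> Inv n.+1 k).
  elim=> [|n [IH1 IH2]].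
    split; case=> [|k] hk.
    - exact: Inv_0.
    - by apply: Inv_big.
    - by [].
    - case: k hk => [|k] hk; first exact: Inv_11.
      by apply: Inv_big.
  split=> //; case=> [|k] hk.
    by apply: Inv_0; rewrite hk.
  apply: Inv_step; first by apply: IH2; move: hk => /=; case: (odd n); case: (odd k).
  by move=> hkn; apply: IH1; move: hk => /=; case: (odd n); case: (odd k).
by case: (H n0) => + _; apply.
Qed.

End S.

Theorem mainTheorem4 (R : realType) (n k : nat) :
  (k <= n)%N -> odd n = odd k ->
  (forall x : R, -1 <= x <= 1 -> `|(cheb_ge R n k).[x]| <= `|(cheb_ge R n k).[0]|)
  /\ `|(cheb_ge R n k).[0]| = `|(cheb R n)`_k|
  /\ `|(cheb R n)`_k| <= ((n + k) ^ k)%:R / (k`!)%:R.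
Proof.
move=> hkn hpar; split; last split.
- move=> x hx; have [a [az1 az2 as1 ae1]] := @Inv_all R n k hpar.
  rewrite !ae1.
  have hk : forall m, `|a m| = sgn R n k * a m * (cheb R m).[0].
    move=> m; rewrite -(ger0_norm (as1 m)) !normrM /sgn normrX normrN1 expr1n mul1r.
    case hm: (odd m); first by rewrite az2 // normr0 mul0r.
    by rewrite cheb_at0 hm normrX normrN1 expr1n mulr1.
  apply: le_trans (ler_norm_sum _ _ _) _.
  apply: (@le_trans _ _ (\sum_(m < n.+1) `|a (val m)|)).
    apply: ler_sum => m _; rewrite normrM -[X in _ <= X]mulr1.
    by apply: ler_wpM2l; [exact: normr_ge0 | exact: cheb_bound].
  under eq_bigr => m _ do rewrite hk -mulrA.
  rewrite -mulr_sumr; apply: le_trans (ler_norm _) _.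
  by rewrite normrM /sgn normrX normrN1 expr1n mul1r.
- by rewrite horner_coef0 coef_G add0n.
- exact: tbound.
Qed.
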